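(* Let $f\in C^1[0,1]$ with $f(0)=0$, $h:=f'$, and $q$ satisfying (q). Then $$c^*\ge\max\Big\{\sup_{\varphi\in(0,1]}\frac{f(\varphi)}{\varphi},\ h(0)+2\sqrt{\liminf_{\varphi\to0^+}\frac{q(\varphi)}{\varphi}}\Big\}.$$
   Context: Condition (q): $q\in C[0,1]$, $q>0$ on $(0,1)$, $q(0)=q(1)=0$, and $\limsup_{\varphi\to0^+}q(\varphi)/\varphi<+\infty$. $c^*$ denotes the real number such that there exists $z\in C[0,1]\cap C^1(0,1)$ with $\dot z=h-c-q/z$ and $z<0$ on $(0,1)$, and $z(0)=z(1)=0$, if and only if $c\ge c^*$ (such $z$ then being unique). *)

(* Defs.v *)
From Stdlib Require Import Reals.
From Coquelicot Require Import Coquelicot.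
Open Scope R_scope.

Definition cont_on01 (g : R -> R) : Prop :=
  forall x, 0 <= x <= 1 ->
    filterlim g (within (fun y => 0 <= y <= 1) (locally x)) (locally (g x)).

Definition deriv_on01 (f h : R -> R) : Prop :=
  forall x, 0 <= x <= 1 ->
    filterlim (fun y => (f y - f x) / (y - x))
      (within (fun y => 0 <= y <= 1 /\ y <> x) (locally x)) (locally (h x)).

Definition C1_01 (f h : R -> R) : Prop := deriv_on01 f h /\ cont_on01 h.

Definition liminf_0p (g : R -> R) : Rbar :=
  Lub_Rbar (fun m => exists d, 0 < d /\ forall x, 0 < x < d -> m <= g x).
Definition limsup_0p (g : R -> R) : Rbar :=
  Glb_Rbar (fun M => exists d, 0 < d /\ forall x, 0 < x < d -> g x <= M).

Definition sup_0_1 (g : R -> R) : Rbar :=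
  Lub_Rbar (fun y => exists x, 0 < x <= 1 /\ y = g x).

Definition Rbar_maxd (a b : Rbar) : Rbar := if Rbar_le_dec a b then b else a.

Definition cond_q (q : R -> R) : Prop :=
  cont_on01 q /\ (forall x, 0 < x < 1 -> 0 < q x) /\ q 0 = 0 /\ q 1 = 0 /\
  Rbar_lt (limsup_0p (fun x => q x / x)) p_infty.

Definition admissible (h q : R -> R) (c : R) : Prop :=
  exists z : R -> R,
    cont_on01 z /\
    (forall x, 0 < x < 1 -> is_derive z x (h x - c - q x / z x)) /\
    (forall x, 0 < x < 1 -> z x < 0) /\
    z 0 = 0 /\ z 1 = 0.

Definition is_cstar (h q : R -> R) (cs : R) : Prop :=
  forall c, admissible h q c <-> cs <= c.

(* Main.v *)
Require Import Defs.
From Stdlib Require Import Reals Lra.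
From Coquelicot Require Import Coquelicot.
Open Scope R_scope.

Lemma within_eps (g : R->R) (D : R->Prop) x l :
  filterlim g (within D (locally x)) (locally l) ->
  forall eps, 0 < eps -> exists del, 0 < del /\
    forall y, D y -> Rabs (y - x) < del -> Rabs (g y - l) < eps.
Proof.
  intros H eps He.
  destruct (proj1 (filterlim_locally g l) H (mkposreal eps He)) as [del Hd].
  exists del. split. apply cond_pos.
  intros y Dy Hy. apply (Hd y); auto.
Qed.

Lemma deriv_int f h x : deriv_on01 f h -> 0 < x < 1 -> is_derive f x (h x).
Proof.
  intros Hd Hx. apply is_derive_Reals.
  intros eps He.
  destruct (within_eps _ _ _ _ (Hd x ltac:(lra)) eps He) as [del [Hdel H]].
  assert (Hp : 0 < Rmin del (Rmin x (1 - x))).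
  { apply Rmin_pos; [lra| apply Rmin_pos; lra]. }
  exists (mkposreal _ Hp). intros k Hk Hk2. simpl in Hk2.
  assert (Hm1 := Rmin_l del (Rmin x (1-x))).
  assert (Hm2 := Rmin_r del (Rmin x (1-x))).
  assert (Hm3 := Rmin_l x (1-x)). assert (Hm4 := Rmin_r x (1-x)).
  assert (Habs := Rabs_le_between' k 0 (Rabs k)).
  replace k with ((x + k) - x) at 2 by ring.
  apply H.
  - split; [|lra]. destruct (Rle_lt_dec 0 k); unfold Rabs in Hk2; destruct (Rcase_abs k); lra.
  - replace (x + k - x) with k by ring. lra.
Qed.

Lemma incr_on (G dG : R -> R) lo hi a b :
  (forall x, lo < x < hi -> is_derive G x (dG x) /\ 0 <= dG x) ->
  lo < a -> a <= b -> b < hi -> G a <= G b.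
Proof.
  intros H Ha Hab Hb.
  destruct (Req_dec a b) as [->|Hne]; [lra|].
  destruct (MVT_gen G a b dG) as [c [Hc Heq]].
  - intros x Hx. rewrite Rmin_left in Hx by lra. rewrite Rmax_right in Hx by lra.
    apply H; lra.
  - intros x Hx. rewrite Rmin_left in Hx by lra. rewrite Rmax_right in Hx by lra.
    apply derivable_continuous_pt. exists (dG x). apply is_derive_Reals. apply H; lra.
  - rewrite Rmin_left in Hc by lra. rewrite Rmax_right in Hc by lra.
    assert (0 <= dG c) by (apply H; lra).
    assert (0 <= dG c * (b - a)) by (apply Rmult_le_pos; lra). lra.
Qed.

Lemma mono0 (G dG : R -> R) d :
  0 < d ->
  (forall x, 0 < x < d -> is_derive G x (dG x) /\ 0 <= dG x) ->
  (forall eps, 0 < eps -> exists del, 0 < del /\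
     forall y, 0 < y < del -> Rabs (G y - G 0) < eps) ->
  forall x, 0 < x < d -> G 0 <= G x.
Proof.
  intros Hd H Hc x Hx.
  destruct (Rle_lt_dec (G 0) (G x)) as [|Hlt]; auto.
  destruct (Hc (G 0 - G x) ltac:(lra)) as [del [Hdel Hy]].
  set (a := Rmin (del/2) (x/2)).
  assert (Ha1 : a <= del/2) by apply Rmin_l. assert (Ha2 : a <= x/2) by apply Rmin_r.
  assert (0 < a) by (apply Rmin_pos; lra).
  assert (Habs := Hy a ltac:(lra)).
  assert (G a <= G x) by (apply (incr_on G dG 0 d); try lra; auto).
  apply Rabs_def2 in Habs. lra.
Qed.

Definition ctsR (g : R -> R) x := forall eps, 0 < eps -> exists del, 0 < del /\
  forall y, 0 <= y <= 1 -> Rabs (y - x) < del -> Rabs (g y - g x) < eps.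

Lemma ctsR_plus g1 g2 x : ctsR g1 x -> ctsR g2 x -> ctsR (fun y => g1 y + g2 y) x.
Proof.
  intros H1 H2 eps He.
  destruct (H1 (eps/2) ltac:(lra)) as [d1 [Hd1 K1]].
  destruct (H2 (eps/2) ltac:(lra)) as [d2 [Hd2 K2]].
  exists (Rmin d1 d2). split. apply Rmin_pos; lra.
  intros y Hy Hyx.
  assert (Rabs (y - x) < d1) by (eapply Rlt_le_trans; [apply Hyx| apply Rmin_l]).
  assert (Rabs (y - x) < d2) by (eapply Rlt_le_trans; [apply Hyx| apply Rmin_r]).
  specialize (K1 y Hy H). specialize (K2 y Hy H0).
  replace (g1 y + g2 y - (g1 x + g2 x)) with ((g1 y - g1 x) + (g2 y - g2 x)) by ring.
  eapply Rle_lt_trans. apply Rabs_triang. lra.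
Qed.

Lemma ctsR_scal k g x : ctsR g x -> ctsR (fun y => k * g y) x.
Proof.
  intros H eps He.
  destruct (H (eps / (Rabs k + 1))) as [d [Hd K]].
  { apply Rdiv_lt_0_compat; [lra| generalize (Rabs_pos k); lra]. }
  exists d. split; auto. intros y Hy Hyx.
  replace (k * g y - k * g x) with (k * (g y - g x)) by ring.
  rewrite Rabs_mult. specialize (K y Hy Hyx).
  assert (Hk := Rabs_pos k).
  assert (Hp := Rabs_pos (g y - g x)).
  apply Rle_lt_trans with ((Rabs k + 1) * Rabs (g y - g x)). nra.
  replace eps with ((Rabs k + 1) * (eps / (Rabs k + 1))) by (field; lra).
  apply Rmult_lt_compat_l; lra.
Qed.

Lemma ctsR_id x : ctsR (fun y => y) x.
Proof. intros eps He. exists eps. split; auto. Qed.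

Lemma ctsR_cont g x : 0 <= x <= 1 -> cont_on01 g -> ctsR g x.
Proof.
  intros Hx H eps He. destruct (within_eps _ _ _ _ (H x Hx) eps He) as [d [Hd K]].
  exists d. split; auto.
Qed.

Lemma ctsR_deriv f h x : 0 <= x <= 1 -> deriv_on01 f h -> ctsR f x.
Proof.
  intros Hx H eps He.
  destruct (within_eps _ _ _ _ (H x Hx) 1 ltac:(lra)) as [d [Hd K]].
  assert (Hk := Rabs_pos (h x)).
  assert (Hp : 0 < eps / (Rabs (h x) + 1)) by (apply Rdiv_lt_0_compat; lra).
  exists (Rmin d (eps / (Rabs (h x) + 1))). split. apply Rmin_pos; lra.
  intros y Hy Hyx.
  destruct (Req_dec y x) as [->|Hne].
  { replace (f x - f x) with 0 by ring. rewrite Rabs_R0. lra. }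
  assert (Rabs (y - x) < d) by (eapply Rlt_le_trans; [apply Hyx| apply Rmin_l]).
  assert (H2 : Rabs (y - x) < eps / (Rabs (h x) + 1))
    by (eapply Rlt_le_trans; [apply Hyx| apply Rmin_r]).
  specialize (K y (conj Hy Hne) H0).
  assert (Hne' : y - x <> 0) by lra.
  replace (f y - f x) with ((f y - f x) / (y - x) * (y - x)) by (field; auto).
  rewrite Rabs_mult.
  assert (Rabs ((f y - f x) / (y - x)) < Rabs (h x) + 1).
  { replace ((f y - f x) / (y - x)) with (((f y - f x) / (y - x) - h x) + h x) by ring.
    eapply Rle_lt_trans. apply Rabs_triang. lra. }
  assert (Hq := Rabs_pos (y - x)). assert (Hq2 := Rabs_pos ((f y - f x) / (y - x))).
  apply Rle_lt_trans with ((Rabs (h x) + 1) * Rabs (y - x)). nra.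
  replace eps with ((Rabs (h x) + 1) * (eps / (Rabs (h x) + 1))) by (field; lra).
  apply Rmult_lt_compat_l; lra.
Qed.

Lemma ctsR_0 G : ctsR G 0 -> forall eps, 0 < eps -> exists del, 0 < del /\
     forall y, 0 < y < del -> Rabs (G y - G 0) < eps.
Proof.
  intros H eps He. destruct (H eps He) as [d [Hd K]].
  exists (Rmin d 1). split. apply Rmin_pos; lra.
  intros y Hy. assert (Rmin d 1 <= d) by apply Rmin_l. assert (Rmin d 1 <= 1) by apply Rmin_r.
  apply K. lra. rewrite Rminus_0_r, Rabs_pos_eq; lra.
Qed.

Lemma liminf_bound (g : R -> R) b : 0 < b -> b < real (liminf_0p g) ->
  exists d, 0 < d /\ forall x, 0 < x < d -> b <= g x.
Proof.
  intros Hb Hl. unfold liminf_0p in *.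
  destruct (Lub_Rbar_correct (fun m => exists d, 0 < d /\ forall x, 0 < x < d -> m <= g x)) as [Hub Hle].
  destruct (Lub_Rbar _) as [l| |] eqn:E; simpl in Hl; try lra.
  apply Classical_Prop.NNPP. intro Hn.
  assert (Hu : is_ub_Rbar (fun m => exists d, 0 < d /\ forall x, 0 < x < d -> m <= g x) b).
  { intros m [d [Hd Hm]]. simpl. destruct (Rle_lt_dec m b) as [|Hmb]; auto.
    exfalso. apply Hn. exists d. split; auto. intros x Hx. specialize (Hm x Hx). lra. }
  specialize (Hle _ Hu). simpl in Hle. lra.
Qed.

Lemma isd_plus f g x a b : is_derive f x a -> is_derive g x b -> is_derive (fun y => f y + g y) x (a+b).
Proof. intros; apply (is_derive_plus f g x a b); auto. Qed.
Lemma isd_id x : is_derive (fun y => y) x 1.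
Proof. apply (is_derive_id (K:=R_AbsRing)). Qed.

Lemma part1 f h q z c : deriv_on01 f h -> cont_on01 z ->
  (forall x, 0 < x < 1 -> is_derive z x (h x - c - q x / z x)) ->
  (forall x, 0 < x < 1 -> 0 < q x) -> (forall x, 0 < x < 1 -> z x < 0) ->
  z 0 = 0 -> z 1 = 0 -> f 0 = 0 -> forall x, 0 < x <= 1 -> f x / x <= c.
Proof.
  intros Hf Hz Hzd Hq Hzn Hz0 Hz1 Hf0.
  set (g := fun y => z y + (-1 * f y) + c * y).
  assert (Hg0 : g 0 = 0) by (unfold g; rewrite Hz0, Hf0; ring).
  assert (Hgc : forall x, 0 <= x <= 1 -> ctsR g x).
  { intros x Hx. unfold g. apply ctsR_plus; [apply ctsR_plus|].
    apply ctsR_cont; auto. apply ctsR_scal. eapply ctsR_deriv; eauto.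
    apply (ctsR_scal c (fun y => y)). apply ctsR_id. }
  assert (Key : forall x, 0 < x < 1 -> 0 <= g x).
  { intros x Hx. rewrite <- Hg0.
    apply (mono0 g (fun y => (h y - c - q y / z y) + -1 * h y + c * 1) 1); auto; try lra.
    - intros y Hy. split.
      + unfold g. apply isd_plus; [apply isd_plus|].
        apply Hzd; auto. apply is_derive_scal. apply deriv_int; auto.
        apply is_derive_scal. apply isd_id.
      + assert (0 < q y / - z y). { apply Rdiv_lt_0_compat; [apply Hq|specialize (Hzn y Hy)]; lra. }
        replace (h y - c - q y / z y + -1 * h y + c * 1) with (q y / - z y).
        lra. field. specialize (Hzn y Hy). lra.
    - apply ctsR_0. apply Hgc. lra. }
  assert (Key1 : 0 <= g 1).
  { destruct (Rle_lt_dec 0 (g 1)) as [|Hn]; auto.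
    destruct (Hgc 1 ltac:(lra) (- g 1) ltac:(lra)) as [d [Hd K]].
    set (y := Rmax (1 - d/2) (1/2)).
    assert (y >= 1 - d/2) by (apply Rle_ge, Rmax_l).
    assert (y >= 1/2) by (apply Rle_ge, Rmax_r).
    assert (y < 1) by (unfold y; apply Rmax_lub_lt; lra).
    specialize (K y ltac:(lra)). rewrite Rabs_left in K by lra.
    specialize (K ltac:(lra)). apply Rabs_def2 in K.
    specialize (Key y ltac:(lra)). lra. }
  intros x Hx.
  apply Rle_div_l. lra.
  destruct (Req_dec x 1) as [->|Hne].
  - unfold g in Key1. rewrite Hz1 in Key1. lra.
  - specialize (Key x ltac:(lra)). specialize (Hzn x ltac:(lra)). unfold g in Key. lra.
Qed.

Lemma part2 h q z c : cont_on01 h -> cont_on01 z ->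
  (forall x, 0 < x < 1 -> is_derive z x (h x - c - q x / z x)) ->
  (forall x, 0 < x < 1 -> 0 < q x) -> (forall x, 0 < x < 1 -> z x < 0) ->
  z 0 = 0 -> h 0 + 2 * sqrt (real (liminf_0p (fun x => q x / x))) <= c.
Proof.
  intros Hh Hz Hzd Hq Hzn Hz0.
  set (L := real (liminf_0p (fun x => q x / x))).
  set (S := sqrt L).
  destruct (Rle_lt_dec (h 0 + 2 * S) c) as [|Hlt]; auto. exfalso.
  set (e := (h 0 + 2 * S - c) / 4).
  assert (He : 0 < e) by (unfold e; lra).
  set (T := Rmax 0 (S - e)).
  assert (HT0 : 0 <= T) by apply Rmax_l.
  assert (HT1 : S - e <= T) by apply Rmax_r.
  set (A := c - h 0 + e).
  assert (HA : A <= 2 * T - e) by (unfold A, e in *; lra).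
  assert (Hqb : exists d1, 0 < d1 /\ forall x, 0 < x < d1 -> T * T * x <= q x).
  { destruct (Req_dec T 0) as [HT|HT].
    - exists 1. split. lra. intros x Hx. rewrite HT. specialize (Hq x Hx). nra.
    - assert (HTp : 0 < T) by lra.
      assert (HTe : T = S - e).
      { unfold T. unfold Rmax. destruct (Rle_dec 0 (S - e)); auto. unfold T, Rmax in HT.
        destruct (Rle_dec 0 (S-e)); lra. }
      assert (HS : 0 < S) by lra.
      assert (HL : 0 < L).
      { destruct (Rle_lt_dec L 0) as [Hl|]; auto. unfold S in HS.
        rewrite sqrt_neg_0 in HS by auto. lra. }
      assert (HLS : S * S = L) by (apply sqrt_sqrt; lra).
      destruct (liminf_bound (fun x => q x / x) (T * T)) as [d1 [Hd1 K]].
      + nra.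
      + fold L. rewrite <- HLS. nra.
      + exists (Rmin d1 1). split. apply Rmin_pos; lra.
        intros x Hx. assert (Rmin d1 1 <= d1) by apply Rmin_l.
        assert (Rmin d1 1 <= 1) by apply Rmin_r.
        specialize (K x ltac:(lra)). simpl in K.
        apply Rle_div_r in K; lra. }
  destruct Hqb as [d1 [Hd1 Kq]].
  destruct (within_eps _ _ _ _ (Hh 0 ltac:(lra)) e He) as [d2 [Hd2 Kh]].
  set (d := Rmin (Rmin d1 d2) 1).
  assert (Hdp : 0 < d) by (apply Rmin_pos; [apply Rmin_pos|]; lra).
  assert (Hdd1 : d <= d1) by (unfold d; eapply Rle_trans; [apply Rmin_l| apply Rmin_l]).
  assert (Hdd2 : d <= d2) by (unfold d; eapply Rle_trans; [apply Rmin_l| apply Rmin_r]).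
  assert (Hdd3 : d <= 1) by (unfold d; apply Rmin_r).
  assert (Hhy : forall y, 0 < y < d -> - A < h y - c).
  { intros y Hy. specialize (Kh y ltac:(lra)). rewrite Rminus_0_r, Rabs_pos_eq in Kh by lra.
    specialize (Kh ltac:(lra)). apply Rabs_def2 in Kh. unfold A. lra. }
  assert (Hqy : forall y, 0 < y < d -> T * T * y / - z y <= - (q y / z y)).
  { intros y Hy. specialize (Kq y ltac:(lra)). specialize (Hzn y ltac:(lra)).
    replace (- (q y / z y)) with (q y / - z y) by (field; lra).
    apply Rmult_le_compat_r. left. apply Rinv_0_lt_compat. lra. auto. }
  assert (Hqpos : forall y, 0 < y < d -> 0 <= T * T * y / - z y).
  { intros y Hy. specialize (Hzn y ltac:(lra)). apply Rdiv_le_0_compat; [|lra].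
    apply Rmult_le_pos; nra. }
  assert (KG : forall x, 0 < x < d -> 0 <= A * x + z x).
  { intros x Hx.
    replace 0 with (A * 0 + z 0) by (rewrite Hz0; ring).
    apply (mono0 (fun y => A * y + z y) (fun y => A * 1 + (h y - c - q y / z y)) d); auto.
    - intros y Hy. split.
      + apply isd_plus. apply is_derive_scal, isd_id. apply Hzd; lra.
      + specialize (Hhy y Hy). specialize (Hqy y Hy). specialize (Hqpos y Hy). lra.
    - apply ctsR_0. apply ctsR_plus. apply (ctsR_scal A (fun y => y)), ctsR_id.
      apply ctsR_cont; auto; lra. }
  destruct (Req_dec T 0) as [HT|HT].
  - (* A < 0 *)
    specialize (KG (d/2) ltac:(lra)). specialize (Hzn (d/2) ltac:(lra)). nra.
  - assert (HTp : 0 < T) by lra.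
    set (dl := 2 * T - A). assert (Hdl : 0 < dl) by (unfold dl; lra).
    set (NW := fun y => z y / y + (- dl) * ln y).
    assert (KW : forall a b, 0 < a -> a <= b -> b < d -> NW a <= NW b).
    { intros a b Ha Hab Hb.
      apply (incr_on NW (fun y => ((h y - c - q y / z y) * y - z y * 1) / y ^ 2 + (- dl) * / y) 0 d); auto.
      intros y Hy. split.
      - unfold NW. apply isd_plus. apply is_derive_div. apply Hzd; lra. apply isd_id. lra.
        apply is_derive_scal. apply is_derive_ln. lra.
      - specialize (Hhy y Hy). specialize (Hqy y Hy). specialize (Hzn y ltac:(lra)).
        set (r := - z y / y).
        assert (Hr : 0 < r) by (unfold r; apply Rdiv_lt_0_compat; lra).
        assert (Hzr : z y = - r * y) by (unfold r; field; lra).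
        assert (Hq2 : T * T / r <= - (q y / z y)).
        { replace (T * T / r) with (T * T * y / - z y) by (unfold r; field; lra). auto. }
        set (zp := h y - c - q y / z y) in *.
        assert (Hzp : zp + r - dl >= 0).
        { set (w := q y / z y) in *. set (tr := T * T / r) in *.
          assert (T * T / r + r - 2 * T >= 0).
          { replace (T * T / r + r - 2 * T) with ((r - T) * (r - T) / r) by (field; lra).
            apply Rle_ge, Rdiv_le_0_compat. apply Rle_0_sqr. exact Hr. }
          fold tr in H. unfold zp, dl. lra. }
        replace ((zp * y - z y * 1) / y ^ 2 + - dl * / y) with ((zp + r - dl) / y)
          by (rewrite Hzr; field; lra).
        apply Rdiv_le_0_compat; lra. }
    set (p2 := d / 2).
    set (r2 := - z p2 / p2).
    set (K := (Rabs A + Rabs r2 + 1) / dl).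
    assert (HK : 0 < K) by (unfold K; apply Rdiv_lt_0_compat; [generalize (Rabs_pos A) (Rabs_pos r2)|]; lra).
    set (p1 := p2 * exp (- K)).
    assert (He1 : exp (- K) < 1) by (rewrite <- exp_0; apply exp_increasing; lra).
    assert (He0 : 0 < exp (- K)) by apply exp_pos.
    assert (Hp1 : 0 < p1) by (unfold p1, p2; nra).
    assert (Hp12 : p1 < p2) by (unfold p1, p2; nra).
    assert (Hln : ln p1 = ln p2 - K) by (unfold p1; rewrite ln_mult, ln_exp by (unfold p2; lra); ring).
    specialize (KW p1 p2 Hp1 ltac:(lra) ltac:(unfold p2; lra)).
    unfold NW in KW. rewrite Hln in KW.
    assert (Hz1 : z p1 / p1 <= - r2 - dl * K) by (unfold r2; lra).
    assert (HdK : dl * K = Rabs A + Rabs r2 + 1) by (unfold K; field; lra).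
    rewrite HdK in Hz1.
    assert (z p1 / p1 < - A) by (generalize (Rle_abs A) (Rle_abs (-r2)); rewrite Rabs_Ropp; lra).
    specialize (KG p1 ltac:(unfold p2 in *; lra)).
    apply Rlt_div_l in H; [|lra]. nra.
Qed.

Theorem corollary5p4 (f h q : R -> R) (cstar : R) :
  C1_01 f h -> f 0 = 0 -> cond_q q -> is_cstar h q cstar ->
  Rbar_le
    (Rbar_maxd (sup_0_1 (fun x => f x / x))
       (Finite (h 0 + 2 * sqrt (real (liminf_0p (fun x => q x / x))))))
    (Finite cstar).
Proof.
  intros [Hf Hh] Hf0 [Hqc [Hq [Hq0 [Hq1 _]]]] Hcs.
  destruct (proj2 (Hcs cstar) (Rle_refl _)) as [z [Hz [Hzd [Hzn [Hz0 Hz1]]]]].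
  unfold Rbar_maxd. destruct (Rbar_le_dec _ _).
  - simpl. eapply part2; eauto.
  - unfold sup_0_1.
    destruct (Lub_Rbar_correct (fun y => exists x, 0 < x <= 1 /\ y = f x / x)) as [_ Hle].
    apply Hle. intros y [x [Hx ->]]. simpl. eapply part1; eauto.
Qed.
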